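(* Let $q=p^t$ be a prime power and $m\geq 1$. If there exists an $((n,K,d_z/d_x))_{q^m}$ stabilizer code, then there exists an $((nm,K,d_z^{*}/d_x^{*}))_q$ stabilizer code, where $d_z^{*}\geq d_z$ and $d_x^{*}\geq d_x$.
   Context: For a prime power $q=p^t$, let $\{|x\rangle : x\in\mathbb{F}_q\}$ be an orthonormal basis of $\mathbb{C}^q$, $\omega=e^{2\pi i/p}$, and for $a,b\in\mathbb{F}_q$ let $X(a)|x\rangle=|x+a\rangle$, $Z(b)|x\rangle=\omega^{\mathrm{tr}_{q/p}(bx)}|x\rangle$. For $\mathbf a,\mathbf b\in\mathbb{F}_q^n$, $X(\mathbf a)=X(a_1)\otimes\cdots\otimes X(a_n)$, $Z(\mathbf b)$ similarly, and the error group is $G_n=\{\omega^cX(\mathbf a)Z(\mathbf b): \mathbf a,\mathbf b\in\mathbb{F}_q^n, c\in\mathbb{F}_p\}$. For $e=\omega^cX(\mathbf a)Z(\mathbf b)$, $\mathrm{wt}_X(e)=\#\{i: a_i\neq 0\}$ and $\mathrm{wt}_Z(e)=\#\{i: b_i\neq0\}$. A stabilizer code is the joint $+1$-eigenspace in $\mathbb{C}^{q^n}$ of an abelian subgroup of $G_n$ (not containing nontrivial scalars). An $((n,K,d_z/d_x))_q$ (asymmetric) stabilizer code is a $K$-dimensional stabilizer code in $\mathbb{C}^{q^n}$ that corrects all qudit-flip errors up to $\lfloor (d_x-1)/2\rfloor$ and all phase-shift errors up to $\lfloor (d_z-1)/2\rfloor$; equivalently, with associated additive code $C\leq\mathbb{F}_q^{2n}$,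 $|C|=q^n/K$, $C\leq C^{\perp_s}$ (trace-symplectic dual), $d_x$ and $d_z$ are the minimum $X$-weight and $Z$-weight of elements of $C^{\perp_s}\setminus C$ (of $C^{\perp_s}$ if $K=1$), where for $(\mathbf a|\mathbf b)$ the $X$-weight is the Hamming weight of $\mathbf a$ and the $Z$-weight that of $\mathbf b$. *)

(* Defs.v *)
From HB Require Import structures.
From mathcomp Require Import all_boot all_order all_algebra all_field.
Set Implicit Arguments. Unset Strict Implicit. Unset Printing Implicit Defensive.
Import GRing.Theory.
Local Open Scope ring_scope.

Section StabCodes.
Variable F : finFieldType.

(* characteristic p of F and exponent t with #|F| = p ^ t *)
Definition fchar : nat := pdiv #|F|.
Definition fdeg : nat := logn fchar #|F|.

(* absolute trace tr_{q/p} : F -> F_p (viewed inside F) *)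
Definition ftrace (x : F) : F := \sum_(i < fdeg) x ^+ (fchar ^ i).

Variable n : nat.

Definition svec := ('rV[F]_n * 'rV[F]_n)%type.

Definition svec0 : svec := (0, 0).

Definition hwt (v : 'rV[F]_n) : nat := #|[set i : 'I_n | v 0 i != 0]|.
Definition wtX (u : svec) : nat := hwt u.1.
Definition wtZ (u : svec) : nat := hwt u.2.

Definition dotv (a b : 'rV[F]_n) : F := \sum_(i < n) a 0 i * b 0 i.

Definition symp (u v : svec) : F := ftrace (dotv u.2 v.1 - dotv v.2 u.1).

Definition additive_code (C : {set svec}) : Prop :=
  svec0 \in C /\
  forall u v, u \in C -> v \in C -> (u.1 + v.1, u.2 + v.2) \in C.

Definition sdual (C : {set svec}) : {set svec} :=
  [set v | [forall u in C, symp u v == 0]].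

Definition is_min_of (S : {set svec}) (w : svec -> nat) (d : nat) : Prop :=
  (exists2 v, v \in S & w v = d) /\ (forall v, v \in S -> (d <= w v)%N).

Definition is_stab_code (K dz dx : nat) : Prop :=
  exists C : {set svec},
    [/\ additive_code C,
        (#|C| * K = #|F| ^ n)%N,
        C \subset sdual C &
        let S := if K == 1%N then sdual C :\ svec0 else sdual C :\: C in
        is_min_of S wtX dx /\ is_min_of S wtZ dz].

End StabCodes.

(* Main.v *)
Require Import Defs.
From mathcomp Require Import all_boot all_order all_algebra all_field.
From HB Require Import structures.
From mathcomp Require Import zify.
Set Implicit Arguments. Unset Strict Implicit. Unset Printing Implicit Defensive.
Import GRing.Theory.
Import VectorInternalTheory.
Local Open Scope ring_scope.

Section Trace.
Variables (R : finFieldType) (p t : nat).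
Hypotheses (hp : prime p) (pR : p \in [pchar R]) (hcard : #|R| = (p ^ t)%N).

Lemma t_gt0 : (0 < t)%N.
Proof.
case: t hcard => // h; have := finNzRing_gt1 R; by rewrite h.
Qed.

Lemma fcharE : fchar R = p.
Proof. by rewrite /fchar hcard -(prednK t_gt0) pdiv_pfactor. Qed.

Lemma fdegE : fdeg R = t.
Proof. by rewrite /fdeg fcharE hcard pfactorK. Qed.

Definition tr (x : R) := \sum_(i < t) x ^+ (p ^ i).

Lemma ftraceE x : ftrace x = tr x.
Proof. by rewrite /ftrace fdegE fcharE. Qed.

Lemma frobX (x y : R) i : (x + y) ^+ (p ^ i) = x ^+ (p ^ i) + y ^+ (p ^ i).
Proof.
apply: exprDn_pchar; rewrite pnatX (pnatE _ hp); by rewrite pR.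
Qed.

Lemma trD x y : tr (x + y) = tr x + tr y.
Proof. by rewrite /tr -big_split; apply: eq_bigr => i _; rewrite frobX. Qed.

Lemma tr0 : tr 0 = 0.
Proof. by apply: (@addrI _ (tr 0)); rewrite -trD !addr0. Qed.

Lemma trN x : tr (- x) = - tr x.
Proof. by apply/eqP; rewrite -subr_eq0 opprK addrC -trD subrr tr0. Qed.

Lemma trB x y : tr (x - y) = tr x - tr y.
Proof. by rewrite trD trN. Qed.

Lemma trS I (r : seq I) (P : pred I) (f : I -> R) :
  tr (\sum_(i <- r | P i) f i) = \sum_(i <- r | P i) tr (f i).
Proof. exact: (big_morph _ trD tr0). Qed.

Definition inPF (z : R) := z ^+ p == z.

Lemma frob1 (x y : R) : (x + y) ^+ p = x ^+ p + y ^+ p.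
Proof. by have := frobX x y 1; rewrite expn1. Qed.

Lemma inPFD x y : inPF x -> inPF y -> inPF (x + y).
Proof. by rewrite /inPF frob1 => /eqP-> /eqP->. Qed.

Lemma inPF0 : inPF 0.
Proof. by rewrite /inPF expr0n; case: p hp. Qed.

Lemma inPFS I (r : seq I) (P : pred I) (f : I -> R) :
  (forall i, P i -> inPF (f i)) -> inPF (\sum_(i <- r | P i) f i).
Proof. by move=> h; apply: (big_ind inPF) => //; [exact: inPF0 | exact: inPFD]. Qed.

Lemma trP x : inPF (tr x).
Proof.
rewrite /inPF /tr (big_morph (fun z => z ^+ p) frob1 (eqP inPF0)).
have e : forall i, (x ^+ (p ^ i)) ^+ p = x ^+ (p ^ i.+1).
  by move=> i; rewrite -exprM expnSr.
under eq_bigr => i _ do rewrite e.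
case: t t_gt0 hcard => // t' _ hc.
rewrite (big_ord_recr t') /= (big_ord_recl t') /= -hc expf_card expn0 expr1.
by rewrite addrC.
Qed.
End Trace.


Section PF.
Variables (R : finFieldType) (p t : nat).
Hypotheses (hp : prime p) (pR : p \in [pchar R]) (hcard : #|R| = (p ^ t)%N).

Definition piota (k : 'F_p) : R := (k : nat)%:R.

Lemma Fp_lt (k : 'F_p) : (k < p)%N.
Proof. by case: k => k /=; rewrite Fp_cast. Qed.

Lemma piotaD a b : piota (a + b) = piota a + piota b.
Proof.
have aux : forall N n, N = p -> (n %% N)%:R = n%:R :> R.
  by move=> N n ->; rewrite (GRing.natr_mod_pchar pR).
by rewrite /piota -natrD /= aux // Fp_cast.
Qed.

Lemma piota0 : piota 0 = 0.
Proof. by []. Qed.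

Lemma piota_inj : injective piota.
Proof.
have key : forall a b : 'F_p, (a <= b)%N -> piota a = piota b -> a = b.
  move=> a b ab e; apply/val_inj => /=; apply/eqP; rewrite eqn_leq ab /=.
  have : ((b - a)%:R == 0 :> R) by rewrite natrB // -/(piota a) -/(piota b) e subrr.
  rewrite -(dvdn_pcharf pR) => /dvdn_leq.
  move: ab; rewrite leq_eqVlt => /orP [/eqP->|ltab]; first by rewrite leqnn.
  by rewrite subn_gt0 ltab => /(_ isT); have := Fp_lt b; lia.
move=> a b e; case: (leqP a b) => [ab|/ltnW ba]; first exact: key.
by apply/esym/key.
Qed.

Lemma inPF_piota k : inPF p (piota k).
Proof. by rewrite /inPF -(pFrobenius_autE pR) pFrobenius_aut_nat. Qed.

Lemma inPF_ex z : inPF p z -> exists k, piota k = z.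
Proof.
move=> hz; case: (boolP (z \in [seq piota k | k <- enum 'F_p])).
  by case/mapP=> k _ ->; exists k.
move=> zn; pose P : {poly R} := 'X^p - 'X.
have szP : size P = p.+1.
  rewrite /P size_polyDl ?size_polyXn // size_polyN size_polyX ltnS prime_gt1 //.
have P0 : P != 0 by rewrite -size_poly_eq0 szP.
have := @max_poly_roots _ P (z :: [seq piota k | k <- enum 'F_p]) P0.
rewrite /= size_map -cardE card_Fp // szP ltnn zn /=.
rewrite (map_inj_uniq piota_inj) enum_uniq.
have rt : forall w, inPF p w -> root P w.
  by move=> w /eqP hw; rewrite /root /P !hornerE hw subrr.
rewrite rt //=; suff -> : all (root P) [seq piota k | k <- enum 'F_p] by move/(_ isT isT).
by apply/allP => w /mapP [k _ ->]; apply: rt; apply: inPF_piota.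
Qed.

Lemma tr_nz : exists x, @tr R p t x != 0.
Proof.
apply/existsP/negPn => /forallP H.
have tg := t_gt0 hcard.
pose Q : {poly R} := \sum_(i < t) 'X^(p ^ i).
have hQ : forall x, Q.[x] = tr p t x.
  by move=> x; rewrite /Q horner_sum; apply: eq_bigr => i _; rewrite hornerXn.
have c1 : Q`_1 = 1.
  rewrite /Q coef_sum (bigD1 (Ordinal tg)) //= big1 ?addr0 ?coefXn ?expn0 ?eqxx //.
  move=> i ni; have i0 : (0 < i)%N.
    by case: i ni => [[|i] hi] //= ni; case/eqP: ni; apply/val_inj.
  have h1 : (1 < p ^ i)%N by rewrite -[1%N](expn0 p) ltn_exp2l ?prime_gt1.
  by rewrite coefXn; case: eqP h1 => // <-.
have Q0 : Q != 0.
  by apply/negP => /eqP hq; move: c1; rewrite hq coef0 => /eqP; rewrite eq_sym oner_eq0.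
have := @max_poly_roots _ Q (enum R) Q0.
rewrite enum_uniq -cardE hcard.
have -> : all (root Q) (enum R).
  by apply/allP => x _; rewrite /root hQ; exact: H.
move=> /(_ isT isT); apply/negP; rewrite -leqNgt.
apply: leq_trans (size_sum _ _ _) _.
apply/bigmax_leqP => i _; rewrite size_polyXn.
case: t tg hcard {H hQ c1 Q Q0} i => // t' _ _ i.
by rewrite ltn_exp2l ?prime_gt1.
Qed.

Lemma tr_nondeg y : y != 0 -> exists x, @tr R p t (x * y) != 0.
Proof.
move=> y0; have [x hx] := tr_nz; exists (x / y).
by rewrite mulfVK.
Qed.
End PF.


Section VS.
Variables (L : finFieldType) (p : nat).
Hypotheses (hp : prime p) (pL : p \in [pchar L]).
Local Notation VL := (pPrimeCharType pL).

Lemma scaleE (c : 'F_p) (x : L) : (c *: (x : VL)) = ((c : nat)%:R * x : L).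
Proof. by []. Qed.

Lemma card_V : #|L| = (p ^ (dim VL))%N.
Proof.
have -> : #|L| = #|VL| by [].
rewrite (bij_eq_card (Bijective (@v2rK _ VL) (@r2vK _ VL))).
by rewrite card_mx card_Fp // mul1n.
Qed.

Definition additive_fun (f : L -> 'F_p) := forall x y, f (x + y) = f x + f y.

Lemma add_fun0 f : additive_fun f -> f 0 = 0.
Proof. by move=> hf; apply: (@addrI _ (f 0)); rewrite -hf !addr0. Qed.

Lemma add_funMn f : additive_fun f -> forall x k, f (x *+ k) = f x *+ k.
Proof.
move=> hf x; elim=> [|k IH]; first by rewrite !mulr0n add_fun0.
by rewrite !mulrS hf IH.
Qed.

Lemma add_fun_expand f : additive_fun f -> forall x : L,
  f x = \sum_(i < dim VL) (v2r (x : VL)) 0 i * f (r2v (delta_mx 0 i) : VL).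
Proof.
move=> hf x; rewrite -{1}[x](@v2rK _ VL) {1}[v2r (x : VL)]row_sum_delta linear_sum /=.
rewrite (big_morph f hf (add_fun0 hf)); apply: eq_bigr => i _.
rewrite linearZ /= scaleE mulr_natl add_funMn //.
by rewrite -mulr_natl natr_Zp.
Qed.

Definition addset := [set f : {ffun L -> 'F_p} | [forall x, forall y, f (x + y) == f x + f y]].

Lemma card_addset : (#|addset| <= #|L|)%N.
Proof.
pose phi (f : {ffun L -> 'F_p}) : 'rV['F_p]_(dim VL) :=
  \row_i f (r2v (delta_mx 0 i) : VL).
rewrite -(card_in_imset (f := phi)).
  apply: leq_trans (max_card _) _.
  by rewrite card_mx card_Fp // mul1n card_V.
move=> f g; rewrite !inE => /forallP hf /forallP hg e.
have af : additive_fun f by move=> x y; apply/eqP/(forallP (hf x)).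
have ag : additive_fun g by move=> x y; apply/eqP/(forallP (hg x)).
apply/ffunP => x; rewrite (add_fun_expand af) (add_fun_expand ag).
apply: eq_bigr => i _; congr (_ * _).
by move/rowP/(_ i): e; rewrite /phi !mxE.
Qed.

End VS.


Section Alpha.
Variables (L F : finFieldType) (p m : nat).
Hypotheses (hp : prime p) (pL : p \in [pchar L]) (pF : p \in [pchar F]).
Hypothesis hcard : #|L| = (#|F| ^ m)%N.
Local Notation VL := (pPrimeCharType pL).
Local Notation VF := (pPrimeCharType pF).

Lemma dimE : dim VL = (m * dim VF)%N.
Proof.
have := hcard; rewrite (card_V hp pL) (card_V hp pF) -expnM mulnC.
by move/eqP; rewrite eqn_exp2l ?prime_gt1 // => /eqP.
Qed.

Lemma alpha_aux d (f : L -> 'rV['F_p]_d) (g : 'rV['F_p]_d -> L) :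
  cancel f g -> cancel g f -> (forall x y, f (x + y) = f x + f y) ->
  d = (m * dim VF)%N ->
  exists al : L -> 'rV[F]_m, (forall x y, al (x + y) = al x + al y) /\ bijective al.
Proof.
move=> fK gK fD e; subst d.
pose al (x : L) : 'rV[F]_m := \row_j ((r2v (row j (vec_mx (f x)))) : VF).
pose be (w : 'rV[F]_m) : L := g (mxvec (\matrix_j (v2r (w 0 j : VF)))).
exists al; split.
  move=> x y; apply/rowP => j; rewrite !mxE fD !linearD /=.
  by [].
exists be.
  move=> x; rewrite /be /al.
  have -> : (\matrix_j v2r ((\row_j0 (r2v (row j0 (vec_mx (f x))) : VF)) 0 j : VF))
      = vec_mx (f x).
    by apply/row_matrixP => j; rewrite rowK mxE r2vK.
  by rewrite vec_mxK fK.
move=> w; apply/rowP => j; rewrite /al /be mxE gK mxvecK rowK v2rK.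
by [].
Qed.

Lemma alpha_ex :
  exists al : L -> 'rV[F]_m, (forall x y, al (x + y) = al x + al y) /\ bijective al.
Proof.
apply: (@alpha_aux _ (fun x : L => v2r (x : VL)) (fun r => (r2v r : VL))).
- by move=> x; rewrite v2rK.
- by move=> r; rewrite r2vK.
- by move=> x y; rewrite (linearD v2r).
- exact: dimE.
Qed.
End Alpha.


Definition fp (R : finFieldType) (p : nat) (z : R) : 'F_p :=
  odflt 0 [pick k | piota R k == z].

Section FP.
Variables (R : finFieldType) (p t : nat).
Hypotheses (hp : prime p) (pR : p \in [pchar R]) (hcard : #|R| = (p ^ t)%N).

Lemma fpK (z : R) : inPF p z -> piota R (fp p z) = z.
Proof.
move=> /(inPF_ex hp pR hcard) [k hk]; rewrite /fp.
case: pickP => [k' /eqP //|/(_ k)]; by rewrite hk eqxx.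
Qed.

Lemma fpD (a b : R) : inPF p a -> inPF p b -> fp p (a + b) = fp p a + fp p b.
Proof.
move=> ha hb; apply: (piota_inj hp pR hcard).
by rewrite piotaD // !fpK // inPFD.
Qed.

Lemma fp_inj (a b : R) : inPF p a -> inPF p b -> fp p a = fp p b -> a = b.
Proof. by move=> ha hb e; rewrite -(fpK ha) -(fpK hb) e. Qed.
End FP.

Section Beta.
Variables (L F : finFieldType) (p m tL tF : nat).
Hypotheses (hp : prime p) (pL : p \in [pchar L]) (pF : p \in [pchar F]).
Hypotheses (cardL : #|L| = (p ^ tL)%N) (cardF : #|F| = (p ^ tF)%N).
Hypothesis hcard : #|L| = (#|F| ^ m)%N.
Variable al : L -> 'rV[F]_m.
Hypotheses (alD : forall x y, al (x + y) = al x + al y) (alB : bijective al).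

Local Notation trL := (@tr L p tL).
Local Notation trF := (@tr F p tF).

Definition lam (y : L) : {ffun L -> 'F_p} := [ffun x => fp p (trL (y * x))].
Definition pairF (w : 'rV[F]_m) (x : L) : F := \sum_j trF (w 0 j * al x 0 j).
Definition mu (w : 'rV[F]_m) : {ffun L -> 'F_p} := [ffun x => fp p (pairF w x)].

Lemma pairF_PF w x : inPF p (pairF w x).
Proof. by apply: (inPFS hp pF) => j _; exact: (trP hp pF cardF). Qed.

Lemma pairFDl w1 w2 x : pairF (w1 + w2) x = pairF w1 x + pairF w2 x.
Proof.
rewrite /pairF -big_split; apply: eq_bigr => j _.
by rewrite mxE mulrDl trD.
Qed.

Lemma pairFDr w x1 x2 : pairF w (x1 + x2) = pairF w x1 + pairF w x2.
Proof.
rewrite /pairF -big_split; apply: eq_bigr => j _.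
by rewrite alD mxE mulrDr trD.
Qed.

Lemma lamDl y1 y2 x : lam (y1 + y2) x = lam y1 x + lam y2 x.
Proof. by rewrite !ffunE mulrDl trD // (fpD hp pL cardL) ?trP. Qed.

Lemma lamDr y x1 x2 : lam y (x1 + x2) = lam y x1 + lam y x2.
Proof. by rewrite !ffunE mulrDr trD // (fpD hp pL cardL) ?trP. Qed.

Lemma muDl w1 w2 x : mu (w1 + w2) x = mu w1 x + mu w2 x.
Proof. by rewrite !ffunE pairFDl (fpD hp pF cardF) ?pairF_PF. Qed.

Lemma muDr w x1 x2 : mu w (x1 + x2) = mu w x1 + mu w x2.
Proof. by rewrite !ffunE pairFDr (fpD hp pF cardF) ?pairF_PF. Qed.

Lemma lam_inj : injective lam.
Proof.
move=> y1 y2 e; apply/eqP; rewrite -subr_eq0; apply/negPn/negP => nz.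
have [x hx] := tr_nondeg hp cardL nz.
move/negP: hx; apply; apply/eqP.
have := congr1 (fun f : {ffun L -> 'F_p} => f x) e; rewrite !ffunE.
move/(fp_inj hp pL cardL (trP hp pL cardL _) (trP hp pL cardL _)) => h.
by rewrite mulrC mulrBl trB // h subrr.
Qed.

Lemma mu_inj : injective mu.
Proof.
move=> w1 w2 e; apply/rowP => j; apply/eqP; rewrite -subr_eq0.
apply/negPn/negP => nz.
have [c hc] := tr_nondeg hp cardF nz.
move/negP: hc; apply; apply/eqP.
case: alB => ali alK Kal.
pose u : 'rV[F]_m := \row_k (if k == j then c else 0).
have := congr1 (fun f : {ffun L -> 'F_p} => f (ali u)) e; rewrite !ffunE.
move/(fp_inj hp pF cardF (pairF_PF _ _) (pairF_PF _ _)) => h.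
have : pairF w1 (ali u) - pairF w2 (ali u) = 0 by rewrite h subrr.
rewrite /pairF -sumrB (bigD1 j) //= big1 ?addr0.
  by rewrite Kal !mxE eqxx -trB // -mulrBl mulrC.
by move=> k nk; rewrite Kal !mxE (negbTE nk) !mulr0 tr0 // subrr.
Qed.

Lemma lam_in y : lam y \in addset L p.
Proof. by rewrite inE; apply/forallP => x; apply/forallP => x'; rewrite lamDr. Qed.

Lemma mu_in w : mu w \in addset L p.
Proof. by rewrite inE; apply/forallP => x; apply/forallP => x'; rewrite muDr. Qed.

Lemma mu_onto : [set mu w | w in 'rV[F]_m] = addset L p.
Proof.
apply/eqP; rewrite eqEcard; apply/andP; split.
  by apply/subsetP => f /imsetP [w _ ->]; apply: mu_in.
rewrite card_imset; last exact: mu_inj.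
rewrite card_mx mul1n -hcard.
exact: (card_addset hp pL).
Qed.

Definition be (y : L) : 'rV[F]_m := odflt 0 [pick w | mu w == lam y].

Lemma beP y : mu (be y) = lam y.
Proof.
have : lam y \in [set mu w | w in 'rV[F]_m] by rewrite mu_onto lam_in.
case/imsetP => w _ hw; rewrite /be.
case: pickP => [w' /eqP //|/(_ w)]; by rewrite hw eqxx.
Qed.

Lemma beD y1 y2 : be (y1 + y2) = be y1 + be y2.
Proof.
apply: mu_inj; apply/ffunP => x.
by rewrite muDl !beP lamDl.
Qed.

Lemma be_inj : injective be.
Proof. by move=> y1 y2 e; apply: lam_inj; rewrite -!beP e. Qed.

Lemma be_bij : bijective be.
Proof.
apply: inj_card_bij; first exact: be_inj.
by rewrite card_mx mul1n hcard.
Qed.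

Lemma be_pair y x :
  trL (y * x) = piota L (lam y x) /\ \sum_j trF (be y 0 j * al x 0 j) = piota F (lam y x).
Proof.
split; first by rewrite ffunE (fpK hp pL cardL) // trP.
by rewrite -beP ffunE (fpK hp pF cardF) // pairF_PF.
Qed.
End Beta.


Section Addf.
Variables (U V : zmodType) (g : U -> V).
Hypothesis gD : forall a b, g (a + b) = g a + g b.
Lemma addf0 : g 0 = 0.
Proof. by apply: (@addrI _ (g 0)); rewrite -gD !addr0. Qed.
Lemma addfN a : g (- a) = - g a.
Proof. by apply: (@addrI _ (g a)); rewrite -gD !subrr addf0. Qed.
Lemma addfB a b : g (a - b) = g a - g b.
Proof. by rewrite gD addfN. Qed.
Lemma addf_sum I (r : seq I) (P : pred I) (f : I -> U) :
  g (\sum_(i <- r | P i) f i) = \sum_(i <- r | P i) g (f i).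
Proof. exact: (big_morph g gD addf0). Qed.
Lemma addf_inj0 : injective g -> forall a, g a = 0 -> a = 0.
Proof. by move=> gi a; rewrite -addf0 => /gi. Qed.
End Addf.



Section Transfer.
Variables (L F : finFieldType) (m n p : nat).
Variables (al be : L -> 'rV[F]_m).
Hypotheses (alD : forall x y, al (x + y) = al x + al y)
           (beD : forall x y, be (x + y) = be x + be y).
Hypotheses (alB : bijective al) (beB : bijective be).
Variables (ioL : 'F_p -> L) (ioF : 'F_p -> F) (pi : L -> L -> 'F_p).
Hypotheses (ioLD : forall a b, ioL (a + b) = ioL a + ioL b)
           (ioFD : forall a b, ioF (a + b) = ioF a + ioF b)
           (ioLi : injective ioL) (ioFi : injective ioF).
Hypotheses (trLD : forall a b : L, ftrace (a + b) = ftrace a + ftrace b)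
           (trFD : forall a b : F, ftrace (a + b) = ftrace a + ftrace b).
Hypothesis hpi : forall y x, ftrace (y * x) = ioL (pi y x) /\
   \sum_j ftrace (be y 0 j * al x 0 j) = ioF (pi y x).
Hypothesis hcard : #|L| = (#|F| ^ m)%N.

Definition ex (g : L -> 'rV[F]_m) (a : 'rV[L]_n) : 'rV[F]_(n * m) :=
  mxvec (\matrix_(i, j) g (a 0 i) 0 j).

Lemma exD g : (forall x y, g (x + y) = g x + g y) ->
  forall a b, ex g (a + b) = ex g a + ex g b.
Proof.
move=> gD a b; rewrite /ex -linearD /=; congr mxvec.
by apply/matrixP => i j; rewrite !mxE gD mxE.
Qed.

Lemma ex_bij g : bijective g -> bijective (ex g).
Proof.
case=> gi gK Kg; exists (fun r => \row_i gi (row i (vec_mx r))).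
  move=> a; apply/rowP => i; rewrite mxE /ex mxvecK.
  have -> : row i (\matrix_(i0, j) g (a 0 i0) 0 j) = g (a 0 i).
    by apply/rowP => j; rewrite !mxE.
  by rewrite gK.
move=> r; rewrite /ex -[RHS]vec_mxK; congr mxvec.
by apply/row_matrixP => i; rewrite rowK mxE Kg.
Qed.

Lemma ex_dot g h a b : dotv (ex g b) (ex h a) =
  \sum_i \sum_j g (b 0 i) 0 j * h (a 0 i) 0 j.
Proof.
rewrite /dotv (reindex (uncurry (@mxvec_index n m))) /=; last first.
  by case: (curry_mxvec_bij n m) => f f1 f2; exists f => x _; [apply: f1 | apply: f2].
rewrite pair_bigA /=; apply: eq_bigr => -[i j] _ /=.
by rewrite /ex !mxvecE !mxE.
Qed.

Lemma ex_hwt g : (forall x, g x = 0 -> x = 0) -> forall a, (hwt a <= hwt (ex g a))%N.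
Proof.
move=> g0 a; rewrite /hwt.
pose pr (k : 'I_(n * m)) : 'I_n := (enum_val (cast_ord (esym (mxvec_cast n m)) k)).1.
have prE : forall i j, pr (mxvec_index i j) = i.
  by move=> i j; rewrite /pr /mxvec_index cast_ordK enum_rankK.
apply: leq_trans (leq_imset_card pr _).
apply: subset_leq_card; apply/subsetP => i; rewrite inE => ai.
have gnz : g (a 0 i) != 0 by apply: contra ai => /eqP/g0 ->.
have [j hj] : exists j, g (a 0 i) 0 j != 0.
  apply/existsP; apply: contraR gnz => /existsPn h; apply/eqP/rowP => j.
  by move: (h j); rewrite negbK mxE => /eqP.
apply/imsetP; exists (mxvec_index i j); last by rewrite prE.
by rewrite inE /ex mxvecE mxE.
Qed.

Definition E (u : svec L n) : svec F (n * m) := (ex al u.1, ex be u.2).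

Definition Pp (u v : svec L n) : 'F_p :=
  \sum_i pi (u.2 0 i) (v.1 0 i) - \sum_i pi (v.2 0 i) (u.1 0 i).

Lemma sympL u v : symp u v = ioL (Pp u v).
Proof.
rewrite /symp /Pp (addfB ioLD) !(addf_sum ioLD) (addfB trLD) /dotv !(addf_sum trLD).
by congr (_ - _); apply: eq_bigr => i _; exact: (hpi _ _).1.
Qed.

Lemma sympF u v : symp (E u) (E v) = ioF (Pp u v).
Proof.
rewrite /symp /= !ex_dot (addfB trFD) !(addf_sum trFD) (addfB ioFD) !(addf_sum ioFD).
by congr (_ - _); apply: eq_bigr => i _; rewrite (addf_sum trFD); exact: (hpi _ _).2.
Qed.

Lemma symp_iff u v : (symp (E u) (E v) == 0) = (symp u v == 0).
Proof.
rewrite sympL sympF; case: (Pp u v =P 0) => [->|nz].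
  by rewrite (addf0 ioLD) (addf0 ioFD) !eqxx.
have f1 : ioF (Pp u v) != 0 by apply/eqP => /(addf_inj0 ioFD ioFi).
have f2 : ioL (Pp u v) != 0 by apply/eqP => /(addf_inj0 ioLD ioLi).
by rewrite (negbTE f1) (negbTE f2).
Qed.

Lemma E_bij : bijective E.
Proof.
case: (ex_bij alB) => ai aK Ka; case: (ex_bij beB) => bi bK Kb.
exists (fun r => (ai r.1, bi r.2)) => [[x y]|[x y]] /=; rewrite /E /=.
  by rewrite aK bK.
by rewrite Ka Kb.
Qed.

Lemma E_inj : injective E.
Proof. by case: E_bij => f h _; apply: can_inj h. Qed.

Lemma E0 : E (svec0 L n) = svec0 F (n * m).
Proof. by rewrite /E /svec0 /= !(addf0 (exD alD)) (addf0 (exD beD)). Qed.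

Lemma E_add u v : E (u.1 + v.1, u.2 + v.2) = ((E u).1 + (E v).1, (E u).2 + (E v).2).
Proof. by rewrite /E /= exD // exD. Qed.

Lemma E_sdual (C : {set svec L n}) : sdual (E @: C) = E @: sdual C.
Proof.
apply/setP => w; case: E_bij => Ei EK KE.
rewrite -[w]KE mem_imset; last exact: E_inj.
rewrite !inE; apply/forallP/forallP => h u.
  apply/implyP => uC; have := h (E u); rewrite imset_f // /=.
  by rewrite symp_iff.
apply/implyP => /imsetP [u' uC ->]; have := h u'; rewrite uC /=.
by rewrite symp_iff.
Qed.

Lemma imsetD_inj (A B : {set svec L n}) : E @: (A :\: B) = E @: A :\: E @: B.
Proof.
apply/setP => w; case: E_bij => Ei EK KE.
by rewrite -[w]KE !inE !mem_imset //; try exact: E_inj; rewrite !inE.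
Qed.

Lemma min_transfer (S : {set svec L n}) (w : svec L n -> nat)
   (w' : svec F (n * m) -> nat) d :
  (forall v, (w v <= w' (E v))%N) -> is_min_of S w d ->
  exists2 d', (d <= d')%N & is_min_of (E @: S) w' d'.
Proof.
move=> hw [[v0 v0S _] hmin].
pose P := fun k => [exists v in E @: S, w' v == k].
have exP : exists k, P k.
  by exists (w' (E v0)); rewrite /P; apply/existsP; exists (E v0); rewrite imset_f /=.
have [d' Pd' mind'] := find_ex_minn exP.
exists d'.
  move: Pd'; rewrite /P => /existsP [v /andP [/imsetP [u uS ->] /eqP <-]].
  exact: leq_trans (hmin _ uS) (hw u).
split.
  by move: Pd'; rewrite /P => /existsP [v /andP [vS /eqP e]]; exists v.
by move=> v vS; apply: mind'; rewrite /P; apply/existsP; exists v; rewrite vS eqxx.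
Qed.

Lemma transfer K dz dx : is_stab_code L n K dz dx ->
  exists dz' dx' : nat, [/\ (dz <= dz')%N, (dx <= dx')%N & is_stab_code F (n * m) K dz' dx'].
Proof.
case=> C [[C0 Cadd] hC hsub [hx hz]].
pose S := if K == 1%N then sdual C :\ svec0 L n else sdual C :\: C.
have hS : (if K == 1%N then sdual (E @: C) :\ svec0 F (n * m)
           else sdual (E @: C) :\: E @: C) = E @: S.
  rewrite /S E_sdual; case: (K == 1%N).
    by rewrite imsetD_inj imset_set1 E0.
  by rewrite imsetD_inj.
have aI : forall x, al x = 0 -> x = 0.
  by apply: addf_inj0 alD _; case: alB => f h _; apply: can_inj h.
have bI : forall x, be x = 0 -> x = 0.
  by apply: addf_inj0 beD _; case: beB => f h _; apply: can_inj h.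
have [dx' ldx hx'] := min_transfer (w' := @wtX F (n * m)) (fun v => ex_hwt aI v.1) hx.
have [dz' ldz hz'] := min_transfer (w' := @wtZ F (n * m)) (fun v => ex_hwt bI v.2) hz.
exists dz', dx'; split => //; exists (E @: C); split.
- split; first by rewrite -E0 imset_f.
  move=> u v /imsetP [u' u'C ->] /imsetP [v' v'C ->].
  by rewrite -E_add imset_f //; apply: Cadd.
- by rewrite card_imset ?hC; [rewrite mulnC expnM -hcard | exact: E_inj].
- by rewrite E_sdual imsetS.
- by rewrite /= hS.
Qed.
End Transfer.

Local Close Scope ring_scope.

Theorem theorem3 (F L : finFieldType) (m n K dz dx : nat) :
  (0 < m)%N -> #|L| = (#|F| ^ m)%N ->
  is_stab_code L n K dz dx ->
  exists dz' dx' : nat,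
    [/\ (dz <= dz')%N, (dx <= dx')%N & is_stab_code F (n * m) K dz' dx'].
Proof.
move=> m0 hcard hC.
have [p hp pF] := finPcharP F.
pose tF := logn p #|F|.
have cardF : #|F| = (p ^ tF)%N := card_pprimeChar pF.
have cardL : #|L| = (p ^ (tF * m))%N by rewrite hcard cardF expnM.
have pL : p \in [pchar L]%R := card_finPcharP cardL hp.
have [al [alD alB]] := alpha_ex hp pL pF hcard.
have trLD : forall a b : L, ftrace (a + b)%R = (ftrace a + ftrace b)%R.
  by move=> a b; rewrite !(ftraceE hp cardL) trD.
have trFD : forall a b : F, ftrace (a + b)%R = (ftrace a + ftrace b)%R.
  by move=> a b; rewrite !(ftraceE hp cardF) trD.
have hpi : forall y x : L, ftrace (y * x)%R = piota L (lam p (tF * m) y x) /\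
   (\sum_j ftrace (be p (tF * m) tF al y 0 j * al x 0 j))%R = piota F (lam p (tF * m) y x).
  move=> y x; rewrite (ftraceE hp cardL).
  have [h1 h2] := be_pair hp pL pF cardL cardF hcard alD alB y x.
  split => //; rewrite -h2; apply: eq_bigr => j _; exact: (ftraceE hp cardF).
exact: (transfer alD
   (beD hp pL pF cardL cardF hcard alD alB) alB
   (be_bij hp pL pF cardL cardF hcard alD alB)
   (piotaD hp pL) (piotaD hp pF) (piota_inj hp pL cardL) (piota_inj hp pF cardF)
   trLD trFD hpi hcard hC).
Qed.
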